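(* Let $I$ be a $\ast$-homog ideal of $D$ and put $M(I)=\{x\in D:\ (x,I)^{\ast}\neq D\}$, where $(x,I)$ denotes the ideal $xD+I$. Then $M(I)$ is a maximal $\ast$-ideal of $D$, and it is the unique maximal $\ast$-ideal of $D$ containing $I$.
   Context: $D$ is an integral domain with quotient field $K$, and $\ast$ is a star operation on $D$ of finite character (i.e. for every nonzero fractional ideal $I$, $I^{\ast}=\bigcup\{J^{\ast}: J\subseteq I,\ J \text{ a nonzero finitely generated fractional ideal}\}$). A $\ast$-ideal is a nonzero fractional ideal $I$ with $I^\ast=I$; it is of finite type if $I=J^\ast$ for some nonzero finitely generated $J$. A maximal $\ast$-ideal is an integral $\ast$-ideal maximal among proper integral $\ast$-ideals. A $\ast$-homog ideal of $D$ is an integral $\ast$-ideal $I$ of finite type with $I\subsetneq D$ such that $(J+L)^{\ast}\neq D$ for every pair $J,L$ of proper integral $\ast$-ideals of finite type with $I\subseteq J$ and $I\subseteq L$. *)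

(* Defs.v *)
(* Fractional ideals are modelled as subsets (K -> Prop) of
   the quotient field K (a fieldType); the domain D is a subring of K whose
   fraction field is K. *)
From HB Require Import structures.
From mathcomp Require Import all_boot all_order all_algebra.
Set Implicit Arguments. Unset Strict Implicit. Unset Printing Implicit Defensive.
Import GRing.Theory.
Local Open Scope ring_scope.

Section StarDefs.
Variable K : fieldType.
Implicit Types (D I J L : K -> Prop) (x y z : K).

Definition subs I J := forall z, I z -> J z.
Definition seteq I J := forall z, I z <-> J z.

Definition domain_with_qf D :=
  [/\ D 0, D 1,
      (forall x y, D x -> D y -> D (x - y)),
      (forall x y, D x -> D y -> D (x * y)) &
      (forall x, exists a b, [/\ D a, D b, b != 0 & x = a / b])].

Definition scale x I : K -> Prop := fun z => exists y, I y /\ z = x * y.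
Definition principal D x : K -> Prop := scale x D.
Definition isum I J : K -> Prop := fun z => exists a b, [/\ I a, J b & z = a + b].

Fixpoint fgen D (s : seq K) : K -> Prop :=
  match s with
  | [::] => fun z => z = 0
  | a :: s' => isum (principal D a) (fgen D s')
  end.

Definition frac_ideal D I :=
  [/\ I 0, (forall x y, I x -> I y -> I (x + y)),
      (forall r x, D r -> I x -> I (r * x)),
      (exists x, I x /\ x != 0) &
      (exists d, [/\ D d, d != 0 & forall x, I x -> D (d * x)])].

Definition fg_frac_ideal D J := frac_ideal D J /\ exists s, seteq J (fgen D s).

Definition integral D I := subs I D.

Definition star_operation D (star : (K -> Prop) -> (K -> Prop)) :=
  [/\ (forall I, frac_ideal D I -> frac_ideal D (star I)),
      ((forall x, x != 0 -> seteq (star (principal D x)) (principal D x)) /\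
      (forall x I, x != 0 -> frac_ideal D I ->
         seteq (star (scale x I)) (scale x (star I)))),
      (forall I, frac_ideal D I -> subs I (star I)),
      (forall I J, frac_ideal D I -> frac_ideal D J -> subs I J ->
         subs (star I) (star J)) &
      (forall I, frac_ideal D I -> seteq (star (star I)) (star I))].

Definition finite_character D (star : (K -> Prop) -> (K -> Prop)) :=
  forall I, frac_ideal D I ->
    seteq (star I)
      (fun z => exists J, [/\ fg_frac_ideal D J, subs J I & star J z]).

Definition star_ideal D star I := frac_ideal D I /\ seteq (star I) I.

Definition finite_type D star I :=
  star_ideal D star I /\ exists J, fg_frac_ideal D J /\ seteq I (star J).

Definition proper_integral D I := integral D I /\ ~ seteq I D.

Definition maximal_star_ideal D star I :=
  [/\ star_ideal D star I, proper_integral D I &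
      forall J, star_ideal D star J -> proper_integral D J -> subs I J ->
        seteq J I].

Definition star_homog D star I :=
  [/\ finite_type D star I, proper_integral D I &
      forall J L, finite_type D star J -> proper_integral D J -> subs I J ->
        finite_type D star L -> proper_integral D L -> subs I L ->
        ~ seteq (star (isum J L)) D].

Definition MI D star I : K -> Prop :=
  fun x => D x /\ ~ seteq (star (isum (principal D x) I)) D.

End StarDefs.

(* Main.v *)
Require Import Defs.
From HB Require Import structures.
From mathcomp Require Import all_boot all_order all_algebra.
From Stdlib Require Import FunctionalExtensionality PropExtensionality.
Set Implicit Arguments. Unset Strict Implicit. Unset Printing Implicit Defensive.
Import GRing.Theory.

Section Aux.
Local Open Scope ring_scope.
Variable K : fieldType.
Variable D : K -> Prop.
Variable st : (K -> Prop) -> (K -> Prop).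
Hypothesis HD : domain_with_qf D.
Hypothesis Hstar : star_operation D st.
Implicit Types A B C J : K -> Prop.

Lemma seteq_eq (A B : K -> Prop) : seteq A B -> A = B.
Proof.
move=> h; apply: functional_extensionality => z.
by apply: propositional_extensionality; exact: h.
Qed.

Lemma D0 : D 0. Proof. by case: HD. Qed.
Lemma D1 : D 1. Proof. by case: HD. Qed.
Lemma D_mul x y : D x -> D y -> D (x * y). Proof. case: HD => _ _ _ h _; exact: h. Qed.
Lemma D_sub x y : D x -> D y -> D (x - y). Proof. case: HD => _ _ h _ _; exact: h. Qed.
Lemma D_add x y : D x -> D y -> D (x + y).
Proof.
move=> hx hy; have := D_sub hx (D_sub D0 hy).
by rewrite sub0r opprK.
Qed.

Definition wid (A : K -> Prop) :=
  [/\ A 0, (forall x y, A x -> A y -> A (x + y)),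
      (forall r x, D r -> A x -> A (r * x)) & subs A D].
Definition iid A := wid A /\ exists x, A x /\ x != 0.

Lemma wid_D : wid D.
Proof. split; [exact: D0 | exact: D_add | exact: D_mul | by []]. Qed.
Lemma iid_D : iid D.
Proof. split; first exact: wid_D. exists 1; split; [exact: D1 | exact: oner_neq0]. Qed.

Lemma iid_frac A : iid A -> frac_ideal D A.
Proof.
move=> [[h0 ha hm hs] hn]; split => //.
exists 1; split; [exact: D1 | exact: oner_neq0 | ].
by move=> x hx; rewrite mul1r; apply: hs.
Qed.

Lemma frac_iid A : frac_ideal D A -> subs A D -> iid A.
Proof. by move=> [h0 ha hm hn _] hs; split. Qed.

Lemma wid_principal x : D x -> wid (principal D x).
Proof.
move=> hx; split.
- by exists 0; split; [exact: D0 | rewrite mulr0].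
- move=> _ _ [y1 [h1 ->]] [y2 [h2 ->]]; exists (y1 + y2); split; first exact: D_add.
  by rewrite mulrDr.
- move=> r _ hr [y [hy ->]]; exists (r * y); split; first exact: D_mul.
  by rewrite mulrCA.
- by move=> _ [y [hy ->]]; apply: D_mul.
Qed.

Lemma wid_isum A B : wid A -> wid B -> wid (isum A B).
Proof.
move=> [a0 aa am as_] [b0 ba bm bs]; split.
- by exists 0, 0; split => //; rewrite addr0.
- move=> _ _ [a1 [b1 [h1 h1' ->]]] [a2 [b2 [h2 h2' ->]]].
  by exists (a1 + a2), (b1 + b2); split; [apply: aa | apply: ba | rewrite addrACA].
- move=> r _ hr [a [b [ha hb ->]]].
  by exists (r * a), (r * b); split; [apply: am | apply: bm | rewrite mulrDr].
- by move=> _ [a [b [ha hb ->]]]; apply: D_add; [apply: as_ | apply: bs].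
Qed.

Lemma iid_isuml A B : iid A -> wid B -> iid (isum A B).
Proof.
move=> [wa [x [hx nx]]] wb; split; first exact: wid_isum.
exists x; split => //; exists x, 0; split => //; first by case: wb.
by rewrite addr0.
Qed.

Lemma iid_isumr A B : wid A -> iid B -> iid (isum A B).
Proof.
move=> wa [wb [x [hx nx]]]; split; first exact: wid_isum.
exists x; split => //; exists 0, x; split => //; first by case: wa.
by rewrite add0r.
Qed.

Lemma isumA A B C : isum A (isum B C) = isum (isum A B) C.
Proof.
apply: seteq_eq => z; split.
- move=> [a [w [ha [b [c [hb hc ->]]] ->]]].
  by exists (a + b), c; split => //; [exists a, b | rewrite addrA].
- move=> [w [c [[a [b [ha hb ->]]] hc ->]]].
  by exists a, (b + c); split => //; [exists b, c | rewrite addrA].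
Qed.

Lemma isumC A B : isum A B = isum B A.
Proof.
apply: seteq_eq => z; split; move=> [a [b [ha hb ->]]];
  by exists b, a; split => //; rewrite addrC.
Qed.

Lemma fgen_cat s1 s2 : fgen D (s1 ++ s2) = isum (fgen D s1) (fgen D s2).
Proof.
elim: s1 => [|a s1 IH] /=.
- apply: seteq_eq => z; split.
  + by move=> hz; exists 0, z; split => //; rewrite add0r.
  + by move=> [a [b [-> hb ->]]]; rewrite add0r.
- by rewrite IH isumA.
Qed.

Lemma fgen_0 s : fgen D s 0.
Proof.
elim: s => [|a s IH] //=.
exists 0, 0; split => //; last by rewrite addr0.
by exists 0; split; [exact: D0 | rewrite mulr0].
Qed.

Lemma mem_fgen a s : a \in s -> fgen D s a.
Proof.
elim: s => [|b s IH] //=; rewrite inE => /orP [/eqP <- | ha].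
- exists a, 0; split; [|exact: fgen_0| by rewrite addr0].
  by exists 1; split; [exact: D1 | rewrite mulr1].
- exists 0, a; split; [|exact: IH| by rewrite add0r].
  by exists 0; split; [exact: D0 | rewrite mulr0].
Qed.

Lemma D_princ1 : principal D 1 = D.
Proof.
apply: seteq_eq => z; split; first by move=> [y [hy ->]]; rewrite mul1r.
by move=> hz; exists z; rewrite mul1r.
Qed.

Lemma star_frac A : frac_ideal D A -> frac_ideal D (st A).
Proof. case: Hstar => h _ _ _ _; exact: h. Qed.
Lemma star_ext A : frac_ideal D A -> subs A (st A).
Proof. case: Hstar => _ _ h _ _; exact: h. Qed.
Lemma star_mono A B : frac_ideal D A -> frac_ideal D B -> subs A B -> subs (st A) (st B).
Proof. case: Hstar => _ _ _ h _; exact: h. Qed.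
Lemma star_idem A : frac_ideal D A -> st (st A) = st A.
Proof. case: Hstar => _ _ _ _ h fa; apply: seteq_eq; exact: h. Qed.

Lemma star_D : st D = D.
Proof.
case: Hstar => _ [hp _] _ _ _.
by rewrite -D_princ1; apply: seteq_eq; apply: hp; exact: oner_neq0.
Qed.

Lemma star_subD A : iid A -> subs (st A) D.
Proof.
move=> ia; rewrite -star_D; apply: star_mono; [exact: iid_frac | exact: iid_frac iid_D|].
by case: ia => [[]].
Qed.

Lemma star_iid A : iid A -> iid (st A).
Proof. move=> ia; apply: frac_iid; [apply: star_frac; exact: iid_frac | exact: star_subD]. Qed.

Lemma star_sum_star A B : wid A -> iid B -> st (isum A (st B)) = st (isum A B).
Proof.
move=> wa ib.
have iAB : iid (isum A B) by apply: iid_isumr.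
have iAsB : iid (isum A (st B)) by apply: iid_isumr => //; exact: star_iid.
have [[_ sadd _ _] _] := star_iid iAB.
have s1 : subs (isum A (st B)) (st (isum A B)).
  move=> _ [a [c [ha hc ->]]]; apply: sadd.
  - apply: star_ext; first exact: iid_frac.
    by exists a, 0; split => //; [case: ib => [[]] | rewrite addr0].
  - move: c hc; apply: star_mono; [exact: iid_frac | exact: iid_frac |].
    by move=> b hb; exists 0, b; split => //; [case: wa | rewrite add0r].
have s2 : subs (isum A B) (isum A (st B)).
  move=> _ [a [b [ha hb ->]]]; exists a, b; split => //.
  by apply: star_ext => //; exact: iid_frac.
apply: seteq_eq => z; split.
- move=> hz; rewrite -(star_idem (iid_frac iAB)).
  move: z hz; apply: star_mono => //; try exact: iid_frac.
  by apply: iid_frac; apply: star_iid.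
- by move: z; apply: star_mono => //; exact: iid_frac.
Qed.

Lemma sum_star2 A B : iid A -> iid B -> st (isum (st A) (st B)) = st (isum A B).
Proof.
move=> ia ib.
rewrite star_sum_star //; last by case: (star_iid ia).
rewrite isumC star_sum_star //; last by case: ib.
by rewrite isumC.
Qed.

Lemma not_full A C : iid A -> iid C -> subs A (st C) -> ~ seteq (st C) D ->
  ~ seteq (st A) D.
Proof.
move=> ia ic sac nc ha; apply: nc => z; split; first exact: star_subD.
move=> /ha hz; rewrite -(star_idem (iid_frac ic)).
move: z hz; apply: star_mono => //; first exact: iid_frac.
by apply: iid_frac; exact: star_iid.
Qed.

Section Main.
Hypothesis Hfc : finite_character D st.
Variable I : K -> Prop.
Hypothesis HI : star_homog D st I.

Lemma iid_I : iid I.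
Proof. by case: HI => [[[hf _] _] [hs _] _]; apply: frac_iid. Qed.

Lemma stI : st I = I.
Proof. by case: HI => [[[_ h] _] _ _]; apply: seteq_eq. Qed.

Lemma I_ne : ~ seteq I D.
Proof. by case: HI => _ [_ h] _. Qed.

Lemma I_eq : exists s0, iid (fgen D s0) /\ I = st (fgen D s0).
Proof.
case: HI => [[_ [J0 [[hfJ [s0 hJ]] hIJ]]] _ _].
have eJ := seteq_eq hJ; have eI := seteq_eq hIJ; subst J0.
exists s0; split => //; apply: frac_iid => // z hz.
case: iid_I => [[_ _ _ hs] _]; apply: hs; rewrite eI.
exact: star_ext.
Qed.

Definition good A := [/\ iid A, subs I A, ~ seteq (st A) D &
  exists s, iid (fgen D s) /\ st A = st (fgen D s)].

Lemma good_props A : good A ->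
  [/\ finite_type D st (st A), proper_integral D (st A) & subs I (st A)].
Proof.
move=> [ia hI hn [s [iS es]]]; split.
- split; first split.
  + by apply: star_frac; exact: iid_frac.
  + by rewrite star_idem //; exact: iid_frac.
  + exists (fgen D s); split; last by rewrite es.
    by split; [exact: iid_frac | exists s].
- by split => //; exact: star_subD.
- by move=> z /hI; apply: star_ext; exact: iid_frac.
Qed.

Lemma good_sum A B : good A -> good B -> good (isum A B).
Proof.
move=> gA gB; have [ia hIa na [s1 [is1 e1]]] := gA.
have [ib hIb nb [s2 [is2 e2]]] := gB.
split.
- by apply: iid_isuml => //; case: ib.
- move=> z hz; exists z, 0; split => //; [exact: hIa | by case: ib => [[]] | by rewrite addr0].
- rewrite -sum_star2 //.
  case: HI => _ _ hh.
  have [f1 p1 s1'] := good_props gA; have [f2 p2 s2'] := good_props gB.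
  exact: hh.
- exists (s1 ++ s2); rewrite fgen_cat; split.
  + by apply: iid_isuml => //; case: is2.
  + by rewrite -sum_star2 // e1 e2 sum_star2.
Qed.

Lemma good_I : good I.
Proof.
split; [exact: iid_I | by [] | by rewrite stI; exact: I_ne |].
have [s0 [is0 e0]] := I_eq; exists s0; split => //.
by rewrite {1}e0 star_idem //; exact: iid_frac.
Qed.

Lemma good_x x : MI D st I x -> good (isum (principal D x) I).
Proof.
move=> [hx hn]; split => //.
- by apply: iid_isumr; [exact: wid_principal | exact: iid_I].
- move=> z hz; exists 0, z; split => //; last by rewrite add0r.
  by exists 0; split; [exact: D0 | rewrite mulr0].
- have [s0 [is0 e0]] := I_eq; exists (x :: s0) => /=; split.
  + by apply: iid_isumr => //; exact: wid_principal.
  + by rewrite {1}e0 star_sum_star //; exact: wid_principal.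
Qed.

Lemma I_MI : subs I (MI D st I).
Proof.
case: iid_I => [[i0 ia im iS] _].
move=> i hi; split; first exact: iS.
apply: (@not_full _ I).
- by apply: iid_isumr; [apply: wid_principal; exact: iS | exact: iid_I].
- exact: iid_I.
- rewrite stI => _ [a [b [[y [hy ->]] hb ->]]]; apply: ia => //.
  by rewrite mulrC; apply: im.
- by rewrite stI; exact: I_ne.
Qed.

Lemma iid_MI : iid (MI D st I).
Proof.
split; last first.
  case: iid_I => _ [x [hx nx]]; exists x; split => //; exact: I_MI.
split.
- by apply: I_MI; case: iid_I => [[]].
- move=> x y hx hy; split; first by apply: D_add; [case: hx | case: hy].
  have g := good_sum (good_x hx) (good_x hy).
  have [ig _ ng _] := g.
  apply: (not_full _ ig) => //.
  + by apply: iid_isumr; [apply: wid_principal; apply: D_add; [case: hx|case: hy] | exact: iid_I].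
  + move=> _ [a [b [[r [hr ->]] hb ->]]]; apply: star_ext; first exact: iid_frac.
    exists (x * r + 0), (y * r + b); split.
    * exists (x * r), 0; split => //; first by exists r.
      by case: iid_I => [[]].
    * by exists (y * r), b; split => //; exists r.
    * by rewrite addr0 addrA mulrDl.
- move=> r x hr hx; split; first by apply: D_mul => //; case: hx.
  have [ig _ ng _] := good_x hx.
  apply: (not_full _ ig) => //.
  + by apply: iid_isumr; [apply: wid_principal; apply: D_mul => //; case: hx | exact: iid_I].
  + move=> _ [a [b [[y [hy ->]] hb ->]]]; apply: star_ext; first exact: iid_frac.
    exists (x * (r * y)), b; split => //; last by rewrite mulrCA mulrA [r * x]mulrC.
    by exists (r * y); split => //; apply: D_mul.
- by move=> x [].
Qed.

Lemma fgen_good s : (forall a, a \in s -> MI D st I a) ->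
  exists B, good B /\ subs (fgen D s) B.
Proof.
elim: s => [|a s IH] hs.
- exists I; split; first exact: good_I.
  by move=> z /= ->; case: iid_I => [[]].
- have [B [gB sB]] : exists B, good B /\ subs (fgen D s) B.
    by apply: IH => b hb; apply: hs; rewrite inE hb orbT.
  have ha : MI D st I a by apply: hs; rewrite inE eqxx.
  exists (isum (isum (principal D a) I) B); split; first exact: good_sum (good_x ha) gB.
  move=> _ [u [w [hu hw ->]]]; exists (u + 0), w; split; [| exact: sB | by rewrite addr0].
  by exists u, 0; split => //; case: iid_I => [[]].
Qed.

Lemma star_MI : subs (st (MI D st I)) (MI D st I).
Proof.
move=> z hz.
have := (Hfc (iid_frac iid_MI) z).1 hz => -[J [[fJ [s hJ]] sJ zJ]].
have [B [gB sB]] : exists B, good B /\ subs (fgen D s) B.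
  by apply: fgen_good => a /mem_fgen /hJ; apply: sJ.
have [iB _ nB _] := gB.
have zB : st B z.
  move: z zJ {hz}; apply: star_mono => //; first exact: iid_frac.
  by move=> w /hJ; apply: sB.
have [[_ sadd smul _] _] := star_iid iB.
split; first exact: star_subD zB.
apply: (not_full _ iB) => //.
- by apply: iid_isumr; [apply: wid_principal; exact: star_subD zB | exact: iid_I].
- move=> _ [a [b [[y [hy ->]] hb ->]]]; apply: sadd.
  + by rewrite mulrC; apply: smul.
  + by apply: star_ext; [exact: iid_frac | case: gB => _ h _ _; exact: h].
Qed.

Lemma MI_proper : ~ seteq (MI D st I) D.
Proof.
move=> h; have [_ hn] := (h 1).2 D1.
apply: hn => z; split.
- apply: star_subD; apply: iid_isumr; [exact: wid_principal D1 | exact: iid_I].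
- move=> hz; apply: star_ext.
  + by apply: iid_frac; apply: iid_isumr; [exact: wid_principal D1 | exact: iid_I].
  + exists z, 0; split; [by exists z; rewrite mul1r | by case: iid_I => [[]] | by rewrite addr0].
Qed.

Lemma max_MI J : star_ideal D st J -> proper_integral D J -> subs I J ->
  subs J (MI D st I).
Proof.
move=> [fJ eJ] [sJ nJ] hIJ; have eJ' := seteq_eq eJ.
have iJ : iid J by apply: frac_iid.
case: fJ => _ ja jm _ _.
move=> x hx; split; first exact: sJ.
apply: (not_full _ iJ); last by rewrite eJ'.
- by apply: iid_isumr; [apply: wid_principal; exact: sJ | exact: iid_I].
- rewrite eJ' => _ [a [b [[y [hy ->]] hb ->]]]; apply: ja; last exact: hIJ.
  by rewrite mulrC; apply: jm.
Qed.

End Main.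
End Aux.

Theorem propositionA (K : fieldType) (D : K -> Prop)
    (star : (K -> Prop) -> (K -> Prop))
    (HD : domain_with_qf D) (Hstar : star_operation D star)
    (Hfc : finite_character D star)
    (I : K -> Prop) (HI : star_homog D star I) :
  maximal_star_ideal D star (MI D star I) /\
  (forall P, maximal_star_ideal D star P -> subs I P -> seteq P (MI D star I)).
Proof.
have fM := iid_frac HD (iid_MI HD Hstar HI).
have sM : star_ideal D star (MI D star I).
  split => // z; split; first exact: (star_MI HD Hstar Hfc HI).
  by apply: (star_ext Hstar fM).
have pM : proper_integral D (MI D star I).
  by split; [move=> x [] | exact: (MI_proper HD Hstar HI)].
split.
- split => // J sJ pJ hMJ.
  have hJM := max_MI HD Hstar HI sJ pJ (fun w hw => hMJ w (I_MI HD Hstar HI hw)).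
  by move=> z; split; [exact: hJM | exact: hMJ].
- move=> P [sP pP mP] hIP.
  have PM := max_MI HD Hstar HI sP pP hIP.
  have := mP _ sM pM PM => h z; split; [exact: PM | exact: (h z).1].
Qed.
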